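(* Fix $F\in\mathcal S^\sharp$ with its $\gamma$, and let $C>0$. Let $t<0$ with $|t|\le C$, $s=x+iy$ with $y>0$ and $|x|\le Cy^{1/4}$, and let $n$ be an integer with $1\le n\le\exp(y^{3/5}/|t|)$. Put $\mathcal I(z):=\gamma(z)e^{\frac{1}{|t|}(J_t(s)-z)^2}n^{-z}$. There exist $y_0,K>0$ depending only on $C,F,\gamma$ such that for all such $t,s,n$ with $y\ge y_0$: (i) if $|x-\Re z|\le y^{3/5}$ and $\tfrac12y^{2/3}\le|y-\Im z|\le2y^{2/3}$, then $|\mathcal I(z)|\le K\exp\!\left(-\frac{y^{4/3}}{10|t|}\right)$; (ii) if $\Re z=2$ and $|y-\Im z|\ge y^{2/3}$, then $|\mathcal I(z)|\le K\exp\!\left(-\frac{1}{2|t|}(y-\Im z)^2\right)$.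
   Context: $\operatorname{Log}$ denotes the principal branch of the logarithm. The extended Selberg class $\mathcal S^\sharp$ is the set of functions $F$, not identically zero, such that: (i) $F(s)=\sum_{n\ge1}a_n n^{-s}$, with the series converging absolutely for $\Re s>1$; (ii) $(s-1)^mF(s)$ extends to an entire function of finite order for some integer $m\ge0$; (iii) letting $m$ be the order of the pole of $F$ at $s=1$ ($m=0$ if there is no pole), there is a function $\gamma(s)=\alpha s^m(s-1)^mQ^s\prod_{i=1}^k\Gamma(\omega_i s+\mu_i)$ with $\alpha\in\mathbb C\setminus\{0\}$, $Q>0$, an integer $k\ge1$, $\omega_i>0$ and $\mu_i\in\mathbb C$ with $\Re\mu_i\ge0$, such that the (entire) function $\xi^F(s):=\gamma(s)F(s)$ satisfies $\xi^F(s)=\overline{\xi^F(1-\bar s)}$ for all $s$. For $t<0$ and $\Im s>0$: $J_t(s):=s+\frac{|t|}{2}\log Q+\frac{|t|}{2}\sum_{i=1}^k\omega_i\operatorname{Log}(\omega_i s)$. *)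

(* Defs.v *)
From Stdlib Require Import Reals Factorial.
From Coquelicot Require Import Coquelicot Complex.
Open Scope R_scope.

Definition Cexp (z : C) : C :=
  (exp (Re z) * cos (Im z), exp (Re z) * sin (Im z)).

(* Principal argument in (-pi, pi] (junk at 0). *)
Definition Carg (z : C) : R :=
  if Rle_dec 0 (Im z) then acos (Re z / Cmod z) else - acos (Re z / Cmod z).

Definition CLog (z : C) : C := (ln (Cmod z), Carg z).

Definition Crpow (a : R) (z : C) : C := Cexp (z * RtoC (ln a))%C.

Fixpoint Cprod (k : nat) (f : nat -> C) : C :=
  match k with O => 1%C | S k' => (Cprod k' f * f k')%C end.

Fixpoint Csum (k : nat) (f : nat -> C) : C :=
  match k with O => 0%C | S k' => (Csum k' f + f k')%C end.

Definition gauss_seq (z : C) (N : nat) : C :=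
  (Crpow (INR N) z * RtoC (INR (fact N)) /
     Cprod (S N) (fun j => z + RtoC (INR j)))%C.

(* Complex Gamma function, Gamma(z) = lim_N gauss_seq z N
   (Euler/Gauss limit formula, valid for z not in {0,-1,-2,...}). *)
Definition CGamma (z : C) : C :=
  (real (Lim_seq (fun N => Re (gauss_seq z N))),
   real (Lim_seq (fun N => Im (gauss_seq z N)))).

Definition gammaF (alpha : C) (m : nat) (Q : R) (k : nat)
  (omega : nat -> R) (mu : nat -> C) (s : C) : C :=
  (alpha * Cpow s m * Cpow (s - 1) m * Crpow Q s *
   Cprod k (fun i => CGamma (RtoC (omega i) * s + mu i)))%C.

Definition J (Q : R) (k : nat) (omega : nat -> R) (t : R) (s : C) : C :=
  (s + RtoC (Rabs t / 2 * ln Q) +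
   RtoC (Rabs t / 2) * Csum k (fun i => RtoC (omega i) * CLog (RtoC (omega i) * s)))%C.

Definition entire (f : C -> C) : Prop :=
  forall z, ex_derive (K := C_AbsRing) (V := C_NormedModule) f z.

Definition finite_order (f : C -> C) : Prop :=
  exists A rho : R, 0 <= rho /\ forall z, Cmod (f z) <= A * exp (Rpower (1 + Cmod z) rho).

Definition in_Ssharp (F : C -> C) (alpha : C) (m : nat) (Q : R) (k : nat)
  (omega : nat -> R) (mu : nat -> C) : Prop :=
  (exists s, s <> 1%C /\ F s <> 0%C) /\
  (exists a : nat -> C, forall s, 1 < Re s ->
      ex_series (fun n => Cmod (a (S n) * Crpow (INR (S n)) (- s))%C) /\
      is_series (K := C_AbsRing) (V := C_NormedModule)
        (fun n => a (S n) * Crpow (INR (S n)) (- s))%C (F s)) /\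
  (* (ii)+(iii) m is the order of the pole at 1 and (s-1)^m F(s) extends to an
     entire function of finite order *)
  (exists G : C -> C, entire G /\ finite_order G /\
      (forall s, s <> 1%C -> G s = (Cpow (s - 1) m * F s)%C) /\
      (m = 0%nat \/ G 1%C <> 0%C)) /\
  alpha <> 0%C /\ 0 < Q /\ (1 <= k)%nat /\
  (forall i, (i < k)%nat -> 0 < omega i /\ 0 <= Re (mu i)) /\
  (exists Xi : C -> C, entire Xi /\
      (forall s, 1 < Re s -> Xi s = (gammaF alpha m Q k omega mu s * F s)%C) /\
      (forall s, Xi s = Cconj (Xi (1 - Cconj s)%C))).

Definition integrandI (alpha : C) (m : nat) (Q : R) (k : nat)
  (omega : nat -> R) (mu : nat -> C) (t : R) (s : C) (n : nat) (z : C) : C :=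
  (gammaF alpha m Q k omega mu z *
   Cexp (RtoC (/ Rabs t) * ((J Q k omega t s - z) * (J Q k omega t s - z))) *
   Crpow (INR n) (- z))%C.

(* Main.v *)
Require Import Defs.
From Stdlib Require Import Reals.
From Coquelicot Require Import Coquelicot Complex.
From Stdlib Require Import Lra Lia Psatz Factorial ZArith.
Open Scope R_scope.

Lemma ln_le_sub1 x : 0 < x -> ln x <= x - 1.
Proof. intros. pose proof (exp_ineq1_le (ln x)). rewrite exp_ln in H0; lra. Qed.

Lemma ln_ge_1inv x : 0 < x -> 1 - / x <= ln x.
Proof. intros. pose proof (ln_le_sub1 (/ x) (Rinv_0_lt_compat _ H)).
  rewrite ln_Rinv in H0 by lra. lra. Qed.

Lemma ln_le_id x : 0 < x -> ln x <= x.
Proof. intros; pose proof (ln_le_sub1 x H); lra. Qed.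

Lemma im_le_Cmod c : Rabs (Im c) <= Cmod c.
Proof.
  pose proof (Cmod2_alt c). pose proof (Cmod_ge_0 c).
  rewrite <- (Rabs_pos_eq (Cmod c)) by lra. apply (Rsqr_le_abs_0 (Im c) (Cmod c)). unfold Rsqr. nra.
Qed.

Lemma re_le_Cmod' c : Rabs (Re c) <= Cmod c.
Proof. apply re_le_Cmod. Qed.


Lemma Cmod_Cexp z : Cmod (Cexp z) = exp (Re z).
Proof.
  unfold Cexp, Cmod; simpl.
  match goal with |- sqrt ?a = _ => replace a with (exp (Re z) * exp (Re z))
    by (pose proof (sin2_cos2 (Im z)); unfold Rsqr in *; nra) end.
  rewrite sqrt_square; auto. left; apply exp_pos.
Qed.

Lemma Cmod_Crpow a z : Cmod (Crpow a z) = exp (Re z * ln a).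
Proof. unfold Crpow. rewrite Cmod_Cexp. unfold Re; simpl. f_equal; ring. Qed.

Fixpoint Rsum (k : nat) (f : nat -> R) : R :=
  match k with O => 0 | S k' => Rsum k' f + f k' end.

Lemma Rsum_le k f g : (forall i, (i < k)%nat -> f i <= g i) -> Rsum k f <= Rsum k g.
Proof. induction k; simpl; intros; [lra|]. pose proof (H k ltac:(lia)).
  assert (Rsum k f <= Rsum k g) by (apply IHk; intros; apply H; lia). lra. Qed.

Lemma Rsum_plus k f g : Rsum k (fun i => f i + g i) = Rsum k f + Rsum k g.
Proof. induction k; simpl; [lra|]. rewrite IHk; ring. Qed.

Lemma Rsum_scal k c f : Rsum k (fun i => c * f i) = c * Rsum k f.
Proof. induction k; simpl; [lra|]. rewrite IHk; ring. Qed.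

Lemma Rsum_const k c : Rsum k (fun _ => c) = INR k * c.
Proof. induction k; simpl Rsum; [simpl; lra|]. rewrite IHk, S_INR; ring. Qed.

Lemma Rsum_nonneg k f : (forall i, (i < k)%nat -> 0 <= f i) -> 0 <= Rsum k f.
Proof. intros. pose proof (Rsum_le k (fun _ => 0) f H). rewrite Rsum_const in H0. lra. Qed.

Lemma term_le_Rsum k f i : (forall i, (i < k)%nat -> 0 <= f i) -> (i < k)%nat -> f i <= Rsum k f.
Proof. induction k; intros; [lia|]. simpl.
  destruct (Nat.eq_dec i k). subst. pose proof (Rsum_nonneg k f ltac:(intros; apply H; lia)). lra.
  pose proof (IHk ltac:(intros; apply H; lia) ltac:(lia)). pose proof (H k ltac:(lia)). lra. Qed.

Lemma Rsum_split a b f : Rsum (a + b) f = Rsum a f + Rsum b (fun i => f (a + i)%nat).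
Proof. induction b; simpl. rewrite Nat.add_0_r; ring.
  rewrite Nat.add_succ_r; simpl. rewrite IHb; ring. Qed.

Lemma Rsum_abs k f : Rabs (Rsum k f) <= Rsum k (fun i => Rabs (f i)).
Proof. induction k; simpl. rewrite Rabs_R0; lra.
  pose proof (Rabs_triang (Rsum k f) (f k)). lra. Qed.

Lemma Re_Csum k f : Re (Csum k f) = Rsum k (fun i => Re (f i)).
Proof. induction k; simpl. reflexivity. rewrite <- IHk. reflexivity. Qed.

Lemma Im_Csum k f : Im (Csum k f) = Rsum k (fun i => Im (f i)).
Proof. induction k; simpl. reflexivity. rewrite <- IHk. reflexivity. Qed.

Lemma Cprod_le k f g : (forall i, (i < k)%nat -> Cmod (f i) <= exp (g i)) ->
  Cmod (Cprod k f) <= exp (Rsum k g).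
Proof. induction k; simpl; intros. rewrite Cmod_1, exp_0; lra.
  rewrite Cmod_mult, exp_plus. apply Rmult_le_compat; try apply Cmod_ge_0.
  apply IHk; intros; apply H; lia. apply H; lia. Qed.

Lemma Cprod_ge k f g : (forall i, (i < k)%nat -> exp (g i) <= Cmod (f i)) ->
  exp (Rsum k g) <= Cmod (Cprod k f).
Proof. induction k; simpl; intros. rewrite Cmod_1, exp_0; lra.
  rewrite Cmod_mult, exp_plus. apply Rmult_le_compat; try (left; apply exp_pos).
  apply IHk; intros; apply H; lia. apply H; lia. Qed.

Lemma ln_fact N : ln (INR (fact N)) = Rsum N (fun i => ln (INR (S i))).
Proof. induction N. simpl. apply ln_1. cbn [Rsum].
  rewrite <- IHN. change (fact (S N)) with (S N * fact N)%nat.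
  rewrite mult_INR, ln_mult. ring. apply lt_0_INR; lia. apply lt_0_INR. apply lt_O_fact. Qed.

Lemma exp_le_exp x y : x <= y -> exp x <= exp y.
Proof. intros [H|H]. left; apply exp_increasing; auto. subst; lra. Qed.

Lemma ln_0' : ln 0 = 0.
Proof. unfold ln. destruct (Rlt_dec 0 0) as [h|h]; [exfalso; exact (Rlt_irrefl 0 h)|reflexivity]. Qed.

Lemma ln2_le1 : ln 2 <= 1.
Proof. pose proof (ln_le_sub1 2 ltac:(lra)); lra. Qed.

Lemma core_step (b M : R) : 0 <= b <= 1 -> 0 <= M ->
  b * (ln (M + 3) - ln (M + 2)) <= ln (M + 1 + b) - ln (M + 1).
Proof.
  intros Hb HM.
  assert (ln (M+3) - ln (M+2) <= / (M+2)).
  { rewrite <- ln_div by lra. pose proof (ln_le_sub1 ((M+3)/(M+2)) ltac:(apply Rdiv_lt_0_compat; lra)).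
    replace ((M + 3) / (M + 2) - 1) with (/ (M+2)) in H by (field; lra). exact H. }
  assert (b / (M+1+b) <= ln (M + 1 + b) - ln (M + 1)).
  { rewrite <- ln_div by lra. pose proof (ln_ge_1inv ((M+1+b)/(M+1)) ltac:(apply Rdiv_lt_0_compat; lra)).
    replace (1 - / ((M + 1 + b) / (M + 1))) with (b / (M+1+b)) in H0 by (field; lra). exact H0. }
  assert (b * / (M+2) <= b / (M+1+b)).
  { unfold Rdiv. apply Rmult_le_compat_l; [lra|]. apply Rinv_le_contravar; lra. }
  assert (0 <= ln (M+3) - ln (M+2)) by (pose proof (ln_le (M+2) (M+3) ltac:(lra) ltac:(lra)); lra).
  nra.
Qed.

Lemma core (b : R) (M : nat) : 0 <= b <= 1 ->
  Rsum M (fun i => ln (INR (S i))) + b * (ln (INR M + 2) - ln 2) <=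
  Rsum M (fun i => ln (INR (S i) + b)).
Proof.
  intros Hb. induction M.
  - simpl. replace (0+2) with 2 by ring. lra.
  - cbn [Rsum]. rewrite S_INR.
    pose proof (core_step b (INR M) Hb (pos_INR M)).
    replace (INR M + 1 + 2) with (INR M + 3) by ring. lra.
Qed.
Definition Gb (s c : R) := 3*(Rabs s+2)^2 + (Rabs s + 2) * Rabs (ln c).

Lemma lnfact_bounds N : 0 <= Rsum N (fun i => ln (INR (S i))) <= INR N * ln (INR N).
Proof. split.
  - apply Rsum_nonneg. intros. rewrite <- ln_1. apply ln_le; [lra|]. rewrite S_INR; pose proof (pos_INR i); lra.
  - rewrite <- Rsum_const. apply Rsum_le. intros. apply ln_le. apply lt_0_INR; lia. apply le_INR; lia.
Qed.

Lemma lnfact_split M P : Rsum (M + P) (fun i => ln (INR (S i))) =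
  Rsum M (fun i => ln (INR (S i))) + Rsum P (fun i => ln (INR (S (M + i)))).
Proof. apply Rsum_split. Qed.

Lemma lmax_c c x : 0 < c -> ln c <= ln (Rmax c x).
Proof. intros. apply ln_le; auto. apply Rmax_l. Qed.

Lemma lmax_x c x : 0 < x -> ln x <= ln (Rmax c x).
Proof. intros. apply ln_le; auto. apply Rmax_r. Qed.

Lemma ln_nat_nonneg N : (1 <= N)%nat -> 0 <= ln (INR N).
Proof. intros. rewrite <- ln_1. apply ln_le; [lra|]. apply (le_INR 1); auto. Qed.

Lemma ln_nat_le N : ln (INR N) <= INR N.
Proof. destruct N. simpl. rewrite ln_0'. lra. apply ln_le_id. apply lt_0_INR; lia. Qed.

Lemma gauss_log s c N : 0 < c <= 1 ->
  s * ln (INR N) + Rsum N (fun i => ln (INR (S i)))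
  - Rsum (S N) (fun j => ln (Rmax c (s + INR j))) <= Gb s c.
Proof.
  intros Hc.
  assert (Hlc : ln c <= 0) by (rewrite <- ln_1; apply ln_le; lra).
  assert (Habs : Rabs (ln c) = - ln c) by (apply Rabs_left1; lra).
  unfold Gb. rewrite Habs.
  pose proof (Rabs_pos s) as Hs0.
  destruct N as [|N].
  { simpl. rewrite ln_0'. pose proof (lmax_c c (s + 0) (proj1 Hc)). nra. }
  set (N' := S N).
  assert (HN1 : 1 <= INR N') by (apply (le_INR 1); unfold N'; lia).
  assert (HlnN : 0 <= ln (INR N')) by (apply ln_nat_nonneg; unfold N'; lia).
  assert (HlnNle : ln (INR N') <= INR N') by apply ln_nat_le.
  pose proof (archimed s) as [Hu1 Hu2].
  destruct (Rlt_dec s 1) as [Hlt|Hge].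
  -
    assert (Hup : (up s <= 1)%Z). { apply le_IZR. assert (IZR (up s) < 2) by lra.
      apply lt_IZR in H. apply IZR_le. lia. }
    set (P := Z.to_nat (1 - up s)).
    assert (HP : INR P = 1 - IZR (up s)).
    { unfold P. rewrite INR_IZR_INZ, Z2Nat.id by lia. rewrite minus_IZR. reflexivity. }
    set (b := s + INR P).
    assert (Hb : 0 <= b < 1) by (unfold b; lra).
    assert (HPs : INR P <= Rabs s + 1) by (pose proof (Rle_abs (-s)); rewrite Rabs_Ropp in H; lra).
    destruct (le_lt_dec N' P) as [HNP|HNP].
    +
      assert (HNP' : INR N' <= INR P) by (apply le_INR; auto).
      assert (Hl : INR (S N') * ln c <= Rsum (S N') (fun j => ln (Rmax c (s + INR j)))).
      { rewrite <- Rsum_const. apply Rsum_le. intros. apply lmax_c; lra. }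
      pose proof (lnfact_bounds N').
      assert (s * ln (INR N') <= Rabs s * INR N').
      { pose proof (Rle_abs s). pose proof (Rle_abs (-s)). rewrite Rabs_Ropp in H1. nra. }
      rewrite S_INR in Hl.
      assert (INR N' * ln (INR N') <= INR N' * INR N') by nra.
      nra.
    +
      set (M := (N' - P)%nat).
      assert (HNM : N' = (M + P)%nat) by (unfold M; lia).
      assert (HSN : S N' = (S P + M)%nat) by (unfold M; lia).
      rewrite HSN, Rsum_split.
      assert (Hl1 : INR (S P) * ln c <= Rsum (S P) (fun j => ln (Rmax c (s + INR j)))).
      { rewrite <- Rsum_const. apply Rsum_le. intros. apply lmax_c; lra. }
      assert (Hl2 : Rsum M (fun i => ln (INR (S i) + b)) <=
                    Rsum M (fun i => ln (Rmax c (s + INR (S P + i))))).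
      { apply Rsum_le. intros. replace (INR (S i) + b) with (s + INR (S P + i)).
        apply lmax_x. rewrite plus_INR, !S_INR; pose proof (pos_INR i); lra.
        unfold b. rewrite plus_INR, !S_INR; ring. }
      pose proof (core b M ltac:(lra)).
      rewrite HNM at 2. rewrite lnfact_split.
      assert (Hf : Rsum P (fun i => ln (INR (S (M + i)))) <= INR P * ln (INR N')).
      { rewrite <- Rsum_const. apply Rsum_le. intros. apply ln_le. apply lt_0_INR; lia. apply le_INR; lia. }
      assert (HlnNM : ln (INR N') <= ln (INR M + 2) + INR P).
      { apply Rle_trans with (ln ((INR P + 1) * (INR M + 2))).
        apply ln_le. apply lt_0_INR; unfold N'; lia. rewrite HNM, plus_INR. pose proof (pos_INR M). pose proof (pos_INR P). nra.
        rewrite ln_mult by (pose proof (pos_INR M); pose proof (pos_INR P); lra).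
        pose proof (ln_le_id (INR P + 1) ltac:(pose proof (pos_INR P); lra)).
        assert (ln (INR P + 1) <= INR P).
        { pose proof (ln_le_sub1 (INR P + 1) ltac:(pose proof (pos_INR P); lra)). lra. }
        lra. }
      assert (HlnM2 : 0 <= ln (INR M + 2) - ln 2).
      { pose proof (ln_le 2 (INR M + 2) ltac:(lra) ltac:(pose proof (pos_INR M); lra)); lra. }
      pose proof ln2_le1. pose proof ln_lt_2.
      rewrite S_INR in Hl1.
      assert (Hsb : s = b - INR P) by (unfold b; ring). clearbody b.
      assert (b * (ln (INR N') - ln (INR M + 2)) <= INR P).
      { pose proof (pos_INR P). assert (0 <= b * (INR P - (ln (INR N') - ln (INR M + 2)))) by (apply Rmult_le_pos; lra).
        assert (0 <= (1 - b) * INR P) by (apply Rmult_le_pos; lra). lra. }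
      rewrite Hsb at 1.
      assert (0 <= (Rabs s + 1 - INR P) * (- ln c)) by (apply Rmult_le_pos; lra).
      assert (b * ln 2 <= 1) by (assert (0 <= (1-b) * ln 2) by (apply Rmult_le_pos; lra); lra).
      assert (0 <= (Rabs s + 2)^2) by nra.
      assert (0 <= Rabs s + 2) by lra.
      assert (0 <= Rabs s ^ 2) by nra.
      ring_simplify. ring_simplify in H. ring_simplify in H2. ring_simplify in H3. ring_simplify in H4. lra.
  -
    assert (Hup : (2 <= up s)%Z). { assert (1 < up s)%Z by (apply lt_IZR; lra). lia. }
    set (E := Z.to_nat (up s - 2)).
    assert (HE : INR E = IZR (up s) - 2).
    { unfold E. rewrite INR_IZR_INZ, Z2Nat.id by lia. rewrite minus_IZR. reflexivity. }
    set (b := s - INR (S E)).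
    assert (Hb : 0 <= b < 1) by (unfold b; rewrite S_INR; lra).
    assert (HEs : INR (S E) <= s) by (rewrite S_INR; lra).
    set (h := fun i => ln (INR (S i) + b)).
    assert (Hl : Rsum (S N') (fun j => h (E + j)%nat) <= Rsum (S N') (fun j => ln (Rmax c (s + INR j)))).
    { apply Rsum_le. intros. unfold h. replace (INR (S (E + i)) + b) with (s + INR i).
      apply lmax_x. pose proof (pos_INR i); lra. unfold b. rewrite S_INR, plus_INR, S_INR. ring. }
    pose proof (Rsum_split E (S N') h) as Hsp.
    pose proof (core b (E + S N') ltac:(lra)) as Hc1. fold h in Hc1.
    assert (Hh : Rsum E h <= INR E * INR E).
    { apply Rle_trans with (Rsum E (fun _ => INR E)). apply Rsum_le. intros. unfold h.
      apply Rle_trans with (ln (INR (S i) + b)). lra.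
      apply Rle_trans with (INR (S i) + b - 1). apply ln_le_sub1. rewrite S_INR; pose proof (pos_INR i); lra.
      rewrite S_INR. assert (INR i + 1 <= INR E) by (rewrite <- S_INR; apply le_INR; lia). lra.
      rewrite Rsum_const. lra. }
    replace (E + S N')%nat with (N' + S E)%nat in Hc1 by lia.
    rewrite lnfact_split in Hc1.
    assert (Hf : INR (S E) * ln (INR N') <= Rsum (S E) (fun i => ln (INR (S (N' + i))))).
    { rewrite <- Rsum_const. apply Rsum_le. intros. apply ln_le. apply lt_0_INR; unfold N'; lia. apply le_INR; lia. }
    assert (HlnN2 : ln (INR N') <= ln (INR (N' + S E) + 2)).
    { apply ln_le. apply lt_0_INR; unfold N'; lia. rewrite plus_INR. pose proof (pos_INR (S E)); lra. }
    pose proof ln2_le1. pose proof ln_lt_2.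
    assert (Habs2 : Rabs s = s) by (apply Rabs_pos_eq; lra).
    assert (INR E <= s) by (rewrite S_INR in HEs; lra).
    assert (Hsb : s = b + INR (S E)) by (unfold b; ring). clearbody b h.
    rewrite Hsb at 1.
    assert (Rsum (E + S N') h = Rsum (N' + S E) h) by (f_equal; lia).
    assert (0 <= b * (ln (INR (N' + S E) + 2) - ln (INR N'))) by (apply Rmult_le_pos; lra).
    assert (b * ln 2 <= 1) by (assert (0 <= (1-b) * ln 2) by (apply Rmult_le_pos; lra); lra).
    assert (INR E * INR E <= s * s) by (pose proof (pos_INR E); nra).
    assert (0 <= (Rabs s + 2) * - ln c) by (apply Rmult_le_pos; lra).
    assert (1 <= s) by (apply Rnot_lt_le; auto). clear Hge. assert (0 <= s ^ 2) by nra.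
    rewrite Habs2 in *. ring_simplify. ring_simplify in Hc1. ring_simplify in Hf.
    ring_simplify in H3. ring_simplify in H4. ring_simplify in H5. ring_simplify in H6. rewrite S_INR in *.
    ring_simplify. ring_simplify in Hf. lra.
Qed.

Lemma gauss_bound w c N : 0 < c <= 1 -> (forall j, c <= Cmod (w + RtoC (INR j))) ->
  Cmod (gauss_seq w N) <= exp (Gb (Re w) c).
Proof.
  intros Hc Hw.
  pose proof (gauss_log (Re w) c N Hc) as HL.
  set (g := fun j => ln (Rmax c (Re w + INR j))).
  assert (Hp : exp (Rsum (S N) g) <= Cmod (Cprod (S N) (fun j => (w + RtoC (INR j))%C))).
  { apply Cprod_ge. intros. unfold g. rewrite exp_ln by (pose proof (Rmax_l c (Re w + INR i)); lra).
    apply Rmax_lub. apply Hw. pose proof (re_le_Cmod (w + RtoC (INR i))).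
    pose proof (Rle_abs (Re (w + RtoC (INR i)))). replace (Re w + INR i) with (Re (w + RtoC (INR i))).
    lra. unfold Re; simpl. ring. }
  assert (Hpos : 0 < exp (Rsum (S N) g)) by apply exp_pos.
  assert (Hne : Cprod (S N) (fun j => (w + RtoC (INR j))%C) <> 0%C).
  { intro H0. rewrite H0, Cmod_0 in Hp. lra. }
  unfold gauss_seq. rewrite Cmod_div by exact Hne. rewrite Cmod_mult, Cmod_Crpow, Cmod_R.
  rewrite Rabs_pos_eq by (apply pos_INR).
  rewrite <- (exp_ln (INR (fact N))) by (apply lt_0_INR, lt_O_fact). rewrite ln_fact.
  rewrite <- exp_plus.
  apply Rle_trans with (exp (Re w * ln (INR N) + Rsum N (fun i => ln (INR (S i)))) / exp (Rsum (S N) g)).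
  { unfold Rdiv. apply Rmult_le_compat_l. left; apply exp_pos. apply Rinv_le_contravar; auto. }
  unfold Rdiv. rewrite <- exp_Ropp, <- exp_plus. apply exp_le_exp. unfold g in *. lra.
Qed.

Lemma real_Lim_bound (u : nat -> R) B : (forall n, Rabs (u n) <= B) -> Rabs (real (Lim_seq u)) <= B.
Proof.
  intros H.
  assert (H1 : Rbar_le (Lim_seq u) (Lim_seq (fun _ => B))).
  { apply Lim_seq_le_loc. exists 0%nat. intros. pose proof (H n). pose proof (Rle_abs (u n)). lra. }
  assert (H2 : Rbar_le (Lim_seq (fun _ => -B)) (Lim_seq u)).
  { apply Lim_seq_le_loc. exists 0%nat. intros. pose proof (H n). pose proof (Rle_abs (- u n)). rewrite Rabs_Ropp in H3. lra. }
  rewrite Lim_seq_const in H1, H2.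
  destruct (Lim_seq u) as [r| |]; simpl in *; try contradiction.
  apply Rabs_le; lra.
Qed.

Lemma CGamma_bound w c : 0 < c <= 1 -> (forall j, c <= Cmod (w + RtoC (INR j))) ->
  Cmod (CGamma w) <= exp (Gb (Re w) c + 1).
Proof.
  intros Hc Hw. set (B := exp (Gb (Re w) c)).
  assert (Hre : forall N, Rabs (Re (gauss_seq w N)) <= B).
  { intros. pose proof (re_le_Cmod (gauss_seq w N)). pose proof (gauss_bound w c N Hc Hw). fold B in H0. lra. }
  assert (Him : forall N, Rabs (Im (gauss_seq w N)) <= B).
  { intros. pose proof (im_le_Cmod (gauss_seq w N)). pose proof (gauss_bound w c N Hc Hw). fold B in H0. lra. }
  pose proof (real_Lim_bound _ _ Hre) as H1. pose proof (real_Lim_bound _ _ Him) as H2.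
  unfold CGamma. eapply Rle_trans. apply Cmod_2Rmax. cbn [fst snd].
  rewrite exp_plus. fold B.
  assert (sqrt 2 <= 2).
  { rewrite <- (sqrt_square 2) at 2 by lra. apply sqrt_le_1_alt. lra. }
  assert (Rmax (Rabs (real (Lim_seq (fun N : nat => Re (gauss_seq w N)))))
            (Rabs (real (Lim_seq (fun N : nat => Im (gauss_seq w N))))) <= B) by (apply Rmax_lub; auto).
  pose proof (exp_pos (Gb (Re w) c)). fold B in H3.
  assert (2 <= exp 1) by (pose proof (exp_ineq1_le 1); lra).
  set (X := Rmax (Rabs (real (Lim_seq (fun N : nat => Re (gauss_seq w N)))))
            (Rabs (real (Lim_seq (fun N : nat => Im (gauss_seq w N)))))) in *.
  assert (0 <= X) by (unfold X; eapply Rle_trans; [apply Rabs_pos|apply Rmax_l]).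
  rewrite Rmult_comm. apply Rmult_le_compat; try lra. apply sqrt_pos.
Qed.

Lemma Rsum_ext k f g : (forall i, (i < k)%nat -> f i = g i) -> Rsum k f = Rsum k g.
Proof. intros. apply Rle_antisym; apply Rsum_le; intros; rewrite H; auto; lra. Qed.

Lemma Re_J Q k om t s : Re (J Q k om t s) = Re s + Rabs t / 2 * ln Q +
  Rabs t / 2 * Rsum k (fun i => om i * ln (Cmod (RtoC (om i) * s))).
Proof.
  unfold J. simpl.
  pose proof (Re_Csum k (fun i => (RtoC (om i) * CLog (RtoC (om i) * s))%C)) as HR.
  cbv [Re] in HR. rewrite HR.
  rewrite (Rsum_ext k _ (fun i => om i * ln (Cmod (RtoC (om i) * s)))).
  unfold Re; ring. intros. unfold CLog, Re; simpl. ring.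
Qed.

Lemma Im_J Q k om t s : Im (J Q k om t s) = Im s +
  Rabs t / 2 * Rsum k (fun i => om i * Carg (RtoC (om i) * s)).
Proof.
  unfold J. simpl.
  pose proof (Im_Csum k (fun i => (RtoC (om i) * CLog (RtoC (om i) * s))%C)) as HI.
  pose proof (Re_Csum k (fun i => (RtoC (om i) * CLog (RtoC (om i) * s))%C)) as HR.
  cbv [Re Im] in HI, HR. rewrite HI, HR.
  rewrite (Rsum_ext k _ (fun i => om i * Carg (RtoC (om i) * s))).
  unfold Im, Re; simpl. ring. intros. unfold CLog, Im; simpl. ring.
Qed.

Lemma Carg_bound v : 0 <= Im v -> 0 <= Carg v <= PI.
Proof. intros. unfold Carg. destruct (Rle_dec 0 (Im v)); [apply acos_bound|contradiction]. Qed.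

Lemma Cmod_scal (a : R) v : 0 < a -> Cmod (RtoC a * v) = a * Cmod v.
Proof. intros. rewrite Cmod_mult, Cmod_R, Rabs_pos_eq; lra. Qed.

Lemma Im_scal (a : R) v : Im (RtoC a * v) = a * Im v.
Proof. unfold Im; simpl. ring. Qed.

Lemma mul_exp_le a b x y : 0 <= a -> a <= exp x -> 0 <= b -> b <= exp y -> a * b <= exp (x + y).
Proof. intros. rewrite exp_plus. apply Rmult_le_compat; auto. Qed.

Lemma pow_le_exp r m : 0 <= r -> r ^ m <= exp (INR m * (r - 1)).
Proof. intros. induction m. simpl. rewrite Rmult_0_l, exp_0. lra.
  rewrite S_INR. replace ((INR m + 1) * (r - 1)) with ((r - 1) + INR m * (r-1)) by ring.
  simpl. apply mul_exp_le; auto. pose proof (exp_ineq1_le (r - 1)). lra. apply pow_le; auto. Qed.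

Lemma Cpow_bound z m : Cmod (Cpow z m) * Cmod (Cpow (z - 1) m) <= exp (2 * INR m * Cmod z).
Proof.
  rewrite !Cmod_pow. replace (2 * INR m * Cmod z) with (INR m * (Cmod z + 1 - 1) + INR m * (Cmod z + 1 - 1)) by ring.
  assert (Cmod (z - 1) <= Cmod z + 1).
  { unfold Cminus. pose proof (Cmod_triangle z (-(1))). rewrite Cmod_opp, Cmod_1 in H. exact H. }
  apply mul_exp_le; try (apply pow_le, Cmod_ge_0).
  - eapply Rle_trans; [|apply pow_le_exp]. apply pow_incr. pose proof (Cmod_ge_0 z); lra. pose proof (Cmod_ge_0 z); lra.
  - eapply Rle_trans; [|apply pow_le_exp]. apply pow_incr. pose proof (Cmod_ge_0 (z-1)); lra. pose proof (Cmod_ge_0 z); lra.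
Qed.

Lemma integrand_mod (alpha : C) (m : nat) (Q : R) (k : nat) (om : nat -> R) (mu : nat -> C) (t : R) (s : C) (n : nat) (z : C) (g : nat -> R) :
  alpha <> 0%C -> t <> 0 ->
  (forall i, (i < k)%nat -> Cmod (CGamma (RtoC (om i) * z + mu i)) <= exp (g i)) ->
  Cmod (integrandI alpha m Q k om mu t s n z) <=
  exp (ln (Cmod alpha) + 2 * INR m * Cmod z + Re z * ln Q + Rsum k g
      + ((Re (J Q k om t s) - Re z)^2 - (Im (J Q k om t s) - Im z)^2) / Rabs t
      - Re z * ln (INR n)).
Proof.
  intros Ha Ht Hg.
  unfold integrandI, gammaF. rewrite !Cmod_mult.
  rewrite Cmod_Cexp, !Cmod_Crpow.
  assert (HP := Cprod_le k _ g Hg).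
  assert (HC := Cpow_bound z m).
  assert (Hre : Re (RtoC (/ Rabs t) * ((J Q k om t s - z) * (J Q k om t s - z))) =
     ((Re (J Q k om t s) - Re z)^2 - (Im (J Q k om t s) - Im z)^2) / Rabs t).
  { unfold Re, Im; simpl. field. apply Rabs_no_R0; auto. }
  rewrite Hre.
  assert (Hα : Cmod alpha = exp (ln (Cmod alpha))) by (rewrite exp_ln; [reflexivity| apply Cmod_gt_0; exact Ha]).
  rewrite Hα at 1.
  assert (Hz : Re (- z) * ln (INR n) = - (Re z * ln (INR n))) by (unfold Re; simpl; ring).
  rewrite Hz.
  set (A := ln (Cmod alpha)). set (E := ((Re (J Q k om t s) - Re z)^2 - (Im (J Q k om t s) - Im z)^2) / Rabs t).
  replace (A + 2 * INR m * Cmod z + Re z * ln Q + Rsum k g + E - Re z * ln (INR n))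
    with (((((A + 2 * INR m * Cmod z) + Re z * ln Q) + Rsum k g) + E) + - (Re z * ln (INR n))) by ring.
  rewrite (Rmult_assoc (exp A) (Cmod (Cpow z m))).
  assert (Hnn : forall x, 0 <= exp x) by (intros; left; apply exp_pos).
  pose proof (Cmod_ge_0 (Cpow z m)). pose proof (Cmod_ge_0 (Cpow (z-1) m)).
  pose proof (Cmod_ge_0 (Cprod k (fun i : nat => CGamma (RtoC (om i) * z + mu i)))).
  apply mul_exp_le; [repeat apply Rmult_le_pos; auto| |apply Hnn|apply Rle_refl].
  apply mul_exp_le; [repeat apply Rmult_le_pos; auto| |apply Hnn|apply Rle_refl].
  apply mul_exp_le; [repeat apply Rmult_le_pos; auto| |auto|exact HP].
  apply mul_exp_le; [repeat apply Rmult_le_pos; auto| |apply Hnn|apply Rle_refl].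
  apply mul_exp_le; [apply Hnn|apply Rle_refl|apply Rmult_le_pos; auto|exact HC].
Qed.

Lemma pow_mono a i j : 1 <= a -> (i <= j)%nat -> a ^ i <= a ^ j.
Proof. intros. apply Rle_pow; auto. Qed.

Lemma sq_le_2 u v x : Rabs x <= u + v -> 0 <= u -> 0 <= v -> x ^ 2 <= 2 * u ^ 2 + 2 * v ^ 2.
Proof. intros. rewrite <- (pow2_abs x). pose proof (Rabs_pos x).
  assert (Rabs x ^ 2 <= (u + v) ^ 2) by (apply pow_incr; auto). pose proof (pow2_ge_0 (u - v)). nra. Qed.

Lemma sq_ge b c x : b - c <= Rabs x -> 0 <= b -> 0 <= c -> b ^ 2 - 2 * b * c <= x ^ 2.
Proof. intros. rewrite <- (pow2_abs x). pose proof (Rabs_pos x).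
  destruct (Rle_dec (b - c) 0).
  assert (0 <= b * (2*c - b)) by (apply Rmult_le_pos; lra). pose proof (pow2_ge_0 (Rabs x)). nra.
  assert ((b - c) ^ 2 <= Rabs x ^ 2) by (apply pow_incr; lra). pose proof (pow2_ge_0 c). nra. Qed.

Lemma pure_i (a t C m LQ R0 W Gc kk la cz rq sg rd id nt : R) :
  1 <= a -> 0 < t -> t <= C -> 0 <= m -> 0 <= LQ -> 0 <= R0 -> 0 <= W -> 0 <= Gc ->
  cz <= (C + 4) * a ^ 60 ->
  rq <= LQ * (C + 1) * a ^ 36 ->
  sg <= 3 * Gc * a ^ 72 + kk ->
  Rabs rd <= a ^ 36 + t * (R0 + 60 * W * a) / 2 ->
  a ^ 40 / 2 - t * W * PI / 2 <= Rabs id ->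
  nt <= (C + 1) * a ^ 72 / t ->
  10 * (C + 3) <= a ^ 8 ->
  20 * C * (2 * m * (C + 4) + LQ * (C + 1) + 3 * Gc + C * (R0 ^ 2 + 3600 * W ^ 2) + W * PI / 2) <= a ^ 8 ->
  la + 2 * m * cz + rq + sg + (rd ^ 2 - id ^ 2) / t + nt <= la + kk - a ^ 80 / (10 * t).
Proof.
  intros Ha Ht HtC Hm HLQ HR0 HW HGc H1 H2 H3 H4 H5 H6 H7 H8.
  set (S0 := 2 * m * (C + 4) + LQ * (C + 1) + 3 * Gc + C * (R0 ^ 2 + 3600 * W ^ 2) + W * PI / 2) in *.
  pose proof PI_RGT_0 as Hpi.
  assert (HC : 0 < C) by lra.
  assert (Hp36 : a ^ 36 <= a ^ 72) by (apply pow_mono; auto; lia).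
  assert (Hp40 : a ^ 40 <= a ^ 72) by (apply pow_mono; auto; lia).
  assert (Hp60 : a ^ 60 <= a ^ 72) by (apply pow_mono; auto; lia).
  assert (Hp2 : a ^ 2 <= a ^ 72) by (apply pow_mono; auto; lia).
  assert (Hp0 : 0 <= a ^ 36) by (apply pow_le; lra).
  assert (Hp40' : 0 <= a ^ 40) by (apply pow_le; lra).
  assert (Hrd : rd ^ 2 <= 2 * a ^ 72 + t ^ 2 * (R0 ^ 2 + 3600 * W ^ 2 * a ^ 2)).
  { pose proof (sq_le_2 _ _ _ H4 Hp0 ltac:(apply Rmult_le_pos; [apply Rmult_le_pos; nra|lra])).
    assert (a ^ 72 = a ^ 36 * a ^ 36) by ring.
    assert ((R0 + 60 * W * a) ^ 2 <= 2 * (R0 ^ 2 + 3600 * W ^ 2 * a ^ 2)) by (pose proof (pow2_ge_0 (R0 - 60 * W * a)); nra).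
    assert (2 * (t * (R0 + 60 * W * a) / 2) ^ 2 = t ^ 2 * (R0 + 60 * W * a) ^ 2 / 2) by (field).
    assert (0 <= t ^ 2) by (apply pow2_ge_0).
    assert (t ^ 2 * (R0 + 60 * W * a) ^ 2 <= t ^ 2 * (2 * (R0 ^ 2 + 3600 * W ^ 2 * a ^ 2))) by (apply Rmult_le_compat_l; auto).
    assert ((a ^ 36) ^ 2 = a ^ 72) by ring.
    lra. }
  assert (Hid : a ^ 80 / 4 - a ^ 40 / 2 * (t * W * PI) <= id ^ 2).
  { pose proof (sq_ge (a ^ 40 / 2) (t * W * PI / 2) id H5 ltac:(lra) ltac:(apply Rmult_le_pos; [|lra]; apply Rmult_le_pos; nra)).
    assert (a ^ 80 = a ^ 40 * a ^ 40) by ring. lra. }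
  set (u := / t).
  assert (Hu : 0 < u) by (apply Rinv_0_lt_compat; auto).
  assert (Hut : t * u = 1) by (unfold u; field; lra).
  assert (HuC : / C <= u) by (apply Rinv_le_contravar; auto).
  assert (Hdiv : (rd ^ 2 - id ^ 2) / t = (rd ^ 2 - id ^ 2) * u) by reflexivity.
  rewrite Hdiv.
  assert (Hd : (rd ^ 2 - id ^ 2) * u <= 2 * a ^ 72 * u + t * (R0 ^ 2 + 3600 * W ^ 2 * a ^ 2) - a ^ 80 / 4 * u + a ^ 40 / 2 * W * PI).
  { assert ((rd ^ 2 - id ^ 2) * u <= (2 * a ^ 72 + t ^ 2 * (R0 ^ 2 + 3600 * W ^ 2 * a ^ 2) - (a ^ 80 / 4 - a ^ 40 / 2 * (t * W * PI))) * u).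
    { apply Rmult_le_compat_r; lra. }
    assert ((2 * a ^ 72 + t ^ 2 * (R0 ^ 2 + 3600 * W ^ 2 * a ^ 2) - (a ^ 80 / 4 - a ^ 40 / 2 * (t * W * PI))) * u
      = 2 * a ^ 72 * u + t * (R0 ^ 2 + 3600 * W ^ 2 * a ^ 2) * (t * u) - a ^ 80 / 4 * u + a ^ 40 / 2 * W * PI * (t * u)) by ring.
    rewrite Hut in H0. lra. }
  assert (Hti : t * (R0 ^ 2 + 3600 * W ^ 2 * a ^ 2) <= C * (R0 ^ 2 + 3600 * W ^ 2) * a ^ 72).
  { assert (H1a : 1 <= a ^ 72) by (pose proof (pow_mono a 0 72 Ha ltac:(lia)) as Hq; simpl pow in Hq at 1; lra).
    assert (HR2 : 0 <= R0 ^ 2) by apply pow2_ge_0. assert (HW2 : 0 <= W ^ 2) by apply pow2_ge_0.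
    assert (R0 ^ 2 * 1 <= R0 ^ 2 * a ^ 72) by (apply Rmult_le_compat_l; auto).
    assert (W ^ 2 * a ^ 2 <= W ^ 2 * a ^ 72) by (apply Rmult_le_compat_l; auto).
    assert (HX : R0 ^ 2 + 3600 * W ^ 2 * a ^ 2 <= (R0 ^ 2 + 3600 * W ^ 2) * a ^ 72) by lra.
    assert (Ha2 : 0 <= a ^ 2) by apply pow2_ge_0.
    assert (HX0 : 0 <= R0 ^ 2 + 3600 * W ^ 2 * a ^ 2) by (pose proof (Rmult_le_pos _ _ HW2 Ha2); lra).
    assert (t * (R0 ^ 2 + 3600 * W ^ 2 * a ^ 2) <= C * (R0 ^ 2 + 3600 * W ^ 2 * a ^ 2)) by (apply Rmult_le_compat_r; auto).
    assert (C * (R0 ^ 2 + 3600 * W ^ 2 * a ^ 2) <= C * ((R0 ^ 2 + 3600 * W ^ 2) * a ^ 72)) by (apply Rmult_le_compat_l; lra).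
    lra. }
  assert (Hindep : 2 * m * cz + rq + t * (R0 ^ 2 + 3600 * W ^ 2 * a ^ 2) + a ^ 40 / 2 * W * PI + 3 * Gc * a ^ 72 <= S0 * a ^ 72).
  { unfold S0.
    assert (2 * m * cz <= 2 * m * ((C + 4) * a ^ 60)) by (apply Rmult_le_compat_l; lra).
    assert (2 * m * (C + 4) * a ^ 60 <= 2 * m * (C + 4) * a ^ 72) by (apply Rmult_le_compat_l; [apply Rmult_le_pos; lra|lra]).
    assert (LQ * (C + 1) * a ^ 36 <= LQ * (C + 1) * a ^ 72) by (apply Rmult_le_compat_l; [apply Rmult_le_pos; lra|lra]).
    assert (W * PI / 2 * a ^ 40 <= W * PI / 2 * a ^ 72) by (apply Rmult_le_compat_l; [apply Rmult_le_pos; [apply Rmult_le_pos|]; lra|lra]).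
    lra. }
  assert (HS0 : S0 * a ^ 72 <= a ^ 80 / 20 * u).
  { assert (0 <= a ^ 72) by (apply pow_le; lra).
    assert (a ^ 80 = a ^ 8 * a ^ 72) by ring.
    assert (S0 * a ^ 72 * 20 * C <= a ^ 80) by nra.
    assert (a ^ 80 / 20 * (/ C) <= a ^ 80 / 20 * u) by (apply Rmult_le_compat_l; nra).
    assert (S0 * a ^ 72 = S0 * a ^ 72 * 20 * C * (/ 20 * / C)) by (field; lra).
    assert (S0 * a ^ 72 * 20 * C * (/ 20 * / C) <= a ^ 80 * (/ 20 * / C)).
    { apply Rmult_le_compat_r; auto. left; apply Rmult_lt_0_compat; [lra|apply Rinv_0_lt_compat; lra]. }
    assert (a ^ 80 / 20 * / C = a ^ 80 * (/ 20 * / C)) by (field; lra). lra. }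
  assert (Hnt : nt <= (C + 1) * a ^ 72 * u) by (unfold u; unfold Rdiv in H6; lra).
  assert (H72 : (C + 3) * a ^ 72 * u <= a ^ 80 / 10 * u).
  { apply Rmult_le_compat_r; [lra|]. assert (0 <= a ^ 72) by (apply pow_le; lra).
    assert (a ^ 80 = a ^ 8 * a ^ 72) by ring. nra. }
  assert (Hgoal : a ^ 80 / (10 * t) = a ^ 80 / 10 * u) by (unfold u; field; lra).
  rewrite Hgoal. lra.
Qed.

Lemma pure_ii (a t C m LQ R0 W G2 la cz rq sg rd id nt D : R) :
  1 <= a -> 0 < t -> t <= C -> 0 <= m -> 0 <= LQ -> 0 <= R0 -> 0 <= W ->
  cz <= 2 + a ^ 60 + Rabs D ->
  rq <= 2 * LQ ->
  sg <= G2 ->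
  Rabs rd <= C * a ^ 15 + 2 + t * (R0 + 60 * W * a) / 2 ->
  Rabs D - t * W * PI / 2 <= Rabs id ->
  nt <= 0 ->
  a ^ 40 <= Rabs D ->
  16 * (C + 2) ^ 2 <= a ^ 50 ->
  8 * C * (2 * m + C * (R0 ^ 2 + 3600 * W ^ 2)) <= a ^ 20 ->
  la + 2 * m * cz + rq + sg + (rd ^ 2 - id ^ 2) / t + nt <=
  (la + 2 * LQ + G2 + 4 * m + C * (W * PI + 2 * m) ^ 2) - 1 / (2 * t) * D ^ 2.
Proof.
  intros Ha Ht HtC Hm HLQ HR0 HW Hcz Hrq Hsg Hrd Hid Hnt HD A1 A2.
  pose proof PI_RGT_0 as Hpi.
  assert (HC : 0 < C) by lra.
  set (S1 := 2 * m + C * (R0 ^ 2 + 3600 * W ^ 2)) in *.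
  set (b := W * PI + 2 * m).
  assert (Hb : 0 <= b) by (unfold b; pose proof (Rmult_le_pos _ _ HW (Rlt_le _ _ Hpi)); lra).
  assert (Hp15 : 1 <= a ^ 15) by (pose proof (pow_mono a 0 15 Ha ltac:(lia)) as Hq; simpl pow in Hq at 1; lra).
  assert (Hp2 : a ^ 2 <= a ^ 60) by (apply pow_mono; auto; lia).
  assert (H1a : 1 <= a ^ 60) by (pose proof (pow_mono a 0 60 Ha ltac:(lia)) as Hq; simpl pow in Hq at 1; lra).
  assert (HD0 : 0 <= Rabs D) by apply Rabs_pos.
  assert (Hx0 : 0 <= C * a ^ 15 + 2) by (pose proof (Rmult_le_pos _ _ (Rlt_le _ _ HC) (Rle_trans _ _ _ Rle_0_1 Hp15)); lra).
  assert (Hv0 : 0 <= t * (R0 + 60 * W * a) / 2).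
  { assert (0 <= R0 + 60 * W * a) by (pose proof (Rmult_le_pos _ _ HW (Rle_trans _ _ _ Rle_0_1 Ha)); lra).
    pose proof (Rmult_le_pos _ _ (Rlt_le _ _ Ht) H). lra. }
  pose proof (sq_le_2 _ _ _ Hrd Hx0 Hv0) as Hrd2.
  assert (Hx2 : (C * a ^ 15 + 2) ^ 2 <= (C + 2) ^ 2 * a ^ 30).
  { assert (C * a ^ 15 + 2 <= (C + 2) * a ^ 15) by lra.
    assert ((C * a ^ 15 + 2) ^ 2 <= ((C + 2) * a ^ 15) ^ 2) by (apply pow_incr; lra).
    assert (((C + 2) * a ^ 15) ^ 2 = (C + 2) ^ 2 * a ^ 30) by ring. lra. }
  assert (HRR : (R0 + 60 * W * a) ^ 2 <= 2 * (R0 ^ 2 + 3600 * W ^ 2 * a ^ 2)) by (pose proof (pow2_ge_0 (R0 - 60 * W * a)); nra).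
  assert (Ht2 : 0 <= t ^ 2) by apply pow2_ge_0.
  assert (Hv2 : 2 * (t * (R0 + 60 * W * a) / 2) ^ 2 <= t ^ 2 * (R0 ^ 2 + 3600 * W ^ 2 * a ^ 2)).
  { assert (2 * (t * (R0 + 60 * W * a) / 2) ^ 2 = t ^ 2 * (R0 + 60 * W * a) ^ 2 / 2) by field.
    assert (t ^ 2 * (R0 + 60 * W * a) ^ 2 <= t ^ 2 * (2 * (R0 ^ 2 + 3600 * W ^ 2 * a ^ 2))) by (apply Rmult_le_compat_l; auto).
    lra. }
  assert (Hid2 : D ^ 2 - 2 * Rabs D * (t * W * PI / 2) <= id ^ 2).
  { pose proof (sq_ge (Rabs D) (t * W * PI / 2) id Hid HD0 ltac:(apply Rmult_le_pos; [|lra]; apply Rmult_le_pos; [apply Rmult_le_pos|]; lra)).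
    rewrite pow2_abs in H. exact H. }
  set (u := / t).
  assert (Hu : 0 < u) by (apply Rinv_0_lt_compat; auto).
  assert (Hut : t * u = 1) by (unfold u; field; lra).
  assert (HuC : / C <= u) by (apply Rinv_le_contravar; auto).
  assert (Hdiv : (rd ^ 2 - id ^ 2) / t = (rd ^ 2 - id ^ 2) * u) by reflexivity.
  rewrite Hdiv.
  assert (Hd : (rd ^ 2 - id ^ 2) * u <= 2 * (C + 2) ^ 2 * a ^ 30 * u + t * (R0 ^ 2 + 3600 * W ^ 2 * a ^ 2) - D ^ 2 * u + Rabs D * W * PI).
  { assert ((rd ^ 2 - id ^ 2) * u <= (2 * (C + 2) ^ 2 * a ^ 30 + t ^ 2 * (R0 ^ 2 + 3600 * W ^ 2 * a ^ 2) - (D ^ 2 - 2 * Rabs D * (t * W * PI / 2))) * u).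
    { apply Rmult_le_compat_r; lra. }
    assert ((2 * (C + 2) ^ 2 * a ^ 30 + t ^ 2 * (R0 ^ 2 + 3600 * W ^ 2 * a ^ 2) - (D ^ 2 - 2 * Rabs D * (t * W * PI / 2))) * u
      = 2 * (C + 2) ^ 2 * a ^ 30 * u + t * (R0 ^ 2 + 3600 * W ^ 2 * a ^ 2) * (t * u) - D ^ 2 * u + Rabs D * W * PI * (t * u)) by (field; lra).
    rewrite Hut in H0. lra. }
  assert (Hti : t * (R0 ^ 2 + 3600 * W ^ 2 * a ^ 2) <= C * (R0 ^ 2 + 3600 * W ^ 2) * a ^ 60).
  { assert (HR2 : 0 <= R0 ^ 2) by apply pow2_ge_0. assert (HW2 : 0 <= W ^ 2) by apply pow2_ge_0.
    assert (R0 ^ 2 * 1 <= R0 ^ 2 * a ^ 60) by (apply Rmult_le_compat_l; auto).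
    assert (W ^ 2 * a ^ 2 <= W ^ 2 * a ^ 60) by (apply Rmult_le_compat_l; auto).
    assert (R0 ^ 2 + 3600 * W ^ 2 * a ^ 2 <= (R0 ^ 2 + 3600 * W ^ 2) * a ^ 60) by lra.
    assert (Ha2 : 0 <= a ^ 2) by apply pow2_ge_0.
    assert (HX0 : 0 <= R0 ^ 2 + 3600 * W ^ 2 * a ^ 2) by (pose proof (Rmult_le_pos _ _ HW2 Ha2); lra).
    assert (t * (R0 ^ 2 + 3600 * W ^ 2 * a ^ 2) <= C * (R0 ^ 2 + 3600 * W ^ 2 * a ^ 2)) by (apply Rmult_le_compat_r; auto).
    assert (C * (R0 ^ 2 + 3600 * W ^ 2 * a ^ 2) <= C * ((R0 ^ 2 + 3600 * W ^ 2) * a ^ 60)) by (apply Rmult_le_compat_l; lra).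
    lra. }
  assert (Hcz2 : 2 * m * cz <= 4 * m + 2 * m * a ^ 60 + 2 * m * Rabs D).
  { assert (2 * m * cz <= 2 * m * (2 + a ^ 60 + Rabs D)) by (apply Rmult_le_compat_l; lra). lra. }
  assert (HDa : a ^ 80 <= D ^ 2).
  { rewrite <- pow2_abs. assert ((a ^ 40) ^ 2 <= Rabs D ^ 2) by (apply pow_incr; split; [apply pow_le; lra|auto]).
    assert ((a ^ 40) ^ 2 = a ^ 80) by ring. lra. }
  assert (Hp30 : 0 <= a ^ 30) by (apply pow_le; lra).
  assert (Hp60 : 0 <= a ^ 60) by (apply pow_le; lra).
  assert (E1 : 2 * (C + 2) ^ 2 * a ^ 30 * u <= a ^ 80 / 8 * u).
  { apply Rmult_le_compat_r; [lra|].
    assert (16 * (C + 2) ^ 2 * a ^ 30 <= a ^ 50 * a ^ 30) by (apply Rmult_le_compat_r; auto).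
    assert (a ^ 50 * a ^ 30 = a ^ 80) by ring. lra. }
  assert (E2 : S1 * a ^ 60 <= a ^ 80 / 8 * u).
  { assert (8 * C * S1 * a ^ 60 <= a ^ 20 * a ^ 60) by (apply Rmult_le_compat_r; auto).
    assert (a ^ 20 * a ^ 60 = a ^ 80) by ring.
    assert (S1 * a ^ 60 <= a ^ 80 / 8 * / C).
    { assert (S1 * a ^ 60 = 8 * C * S1 * a ^ 60 * (/ 8 * / C)) by (field; lra).
      assert (8 * C * S1 * a ^ 60 * (/ 8 * / C) <= a ^ 80 * (/ 8 * / C)).
      { apply Rmult_le_compat_r; [|lra]. left; apply Rmult_lt_0_compat; [lra|apply Rinv_0_lt_compat; lra]. }
      assert (a ^ 80 / 8 * / C = a ^ 80 * (/ 8 * / C)) by (field; lra). lra. }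
    assert (a ^ 80 / 8 * / C <= a ^ 80 / 8 * u) by (apply Rmult_le_compat_l; [pose proof (pow_le a 80 ltac:(lra)); lra|auto]).
    lra. }
  assert (E3 : a ^ 80 / 4 * u <= D ^ 2 / 4 * u) by (apply Rmult_le_compat_r; lra).
  assert (E4 : b * Rabs D <= D ^ 2 / 4 * u + C * b ^ 2).
  { assert (D ^ 2 / 4 * / C <= D ^ 2 / 4 * u) by (apply Rmult_le_compat_l; [pose proof (pow2_ge_0 D); lra|auto]).
    pose proof (pow2_ge_0 (Rabs D - 2 * C * b)).
    assert (Rabs D ^ 2 = D ^ 2) by apply pow2_abs.
    assert (Hk : 4 * C * (b * Rabs D) <= D ^ 2 + 4 * C ^ 2 * b ^ 2).
    { assert ((Rabs D - 2 * C * b) ^ 2 = Rabs D ^ 2 - 4 * C * (b * Rabs D) + 4 * C ^ 2 * b ^ 2) by ring. lra. }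
    assert (b * Rabs D = 4 * C * (b * Rabs D) * / (4 * C)) by (field; lra).
    assert (4 * C * (b * Rabs D) * / (4 * C) <= (D ^ 2 + 4 * C ^ 2 * b ^ 2) * / (4 * C)).
    { apply Rmult_le_compat_r; auto. left; apply Rinv_0_lt_compat; lra. }
    assert ((D ^ 2 + 4 * C ^ 2 * b ^ 2) * / (4 * C) = D ^ 2 / 4 * / C + C * b ^ 2) by (field; lra).
    lra. }
  assert (Hgoal : 1 / (2 * t) * D ^ 2 = D ^ 2 / 2 * u) by (unfold u; field; lra).
  rewrite Hgoal. unfold S1 in *. unfold b in *.
  lra.
Qed.

Lemma Cmod_le_sum c : Cmod c <= Rabs (Re c) + Rabs (Im c).
Proof.
  pose proof (Cmod2_alt c). pose proof (Cmod_ge_0 c).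
  pose proof (Rabs_pos (Re c)). pose proof (Rabs_pos (Im c)).
  rewrite <- (Rabs_pos_eq (Cmod c)) by lra.
  rewrite <- (Rabs_pos_eq (Rabs (Re c) + Rabs (Im c))) by lra.
  apply (Rsqr_le_abs_0 (Cmod c) (Rabs (Re c) + Rabs (Im c))). unfold Rsqr.
  rewrite <- (pow2_abs (Re c)), <- (pow2_abs (Im c)) in H.
  assert (0 <= Rabs (Re c) * Rabs (Im c)) by (apply Rmult_le_pos; auto).
  nra.
Qed.

Lemma Re_w (o : R) (z mu : C) : Re (RtoC o * z + mu) = o * Re z + Re mu.
Proof. unfold Re; simpl. ring. Qed.
Lemma Im_w (o : R) (z mu : C) : Im (RtoC o * z + mu) = o * Im z + Im mu.
Proof. unfold Im; simpl. ring. Qed.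
Lemma Re_wj (w : C) (j : nat) : Re (w + RtoC (INR j)) = Re w + INR j.
Proof. unfold Re; simpl. ring. Qed.
Lemma Im_wj (w : C) (j : nat) : Im (w + RtoC (INR j)) = Im w.
Proof. unfold Im; simpl. ring. Qed.

Lemma ReJ_bound Q k om t s :
  (forall i, (i < k)%nat -> 0 < om i) -> 1 <= Cmod s ->
  Rabs (Re (J Q k om t s) - Re s) <=
  Rabs t / 2 * (Rabs (ln Q) + Rsum k (fun i => om i * Rabs (ln (om i))) + Rsum k om * ln (Cmod s)).
Proof.
  intros Hom Hs. rewrite Re_J.
  assert (Hl : 0 <= ln (Cmod s)) by (rewrite <- ln_1; apply ln_le; lra).
  replace (Re s + Rabs t / 2 * ln Q + Rabs t / 2 * Rsum k (fun i => om i * ln (Cmod (RtoC (om i) * s))) - Re s)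
    with (Rabs t / 2 * (ln Q + Rsum k (fun i => om i * ln (Cmod (RtoC (om i) * s))))) by ring.
  rewrite Rabs_mult. rewrite (Rabs_pos_eq (Rabs t / 2)) by (pose proof (Rabs_pos t); lra).
  apply Rmult_le_compat_l. pose proof (Rabs_pos t); lra.
  eapply Rle_trans. apply Rabs_triang. rewrite Rplus_assoc. apply Rplus_le_compat_l.
  eapply Rle_trans. apply Rsum_abs.
  rewrite Rmult_comm, <- Rsum_scal, <- Rsum_plus. apply Rsum_le. intros.
  pose proof (Hom i H).
  rewrite Cmod_scal by auto. rewrite ln_mult by lra.
  rewrite Rabs_mult, Rabs_pos_eq by lra.
  pose proof (Rabs_triang (ln (om i)) (ln (Cmod s))). rewrite (Rabs_pos_eq (ln (Cmod s))) in H1 by lra.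
  nra.
Qed.

Lemma ImJ_bound Q k om t s :
  (forall i, (i < k)%nat -> 0 < om i) -> 0 <= Im s ->
  Rabs (Im (J Q k om t s) - Im s) <= Rabs t / 2 * Rsum k om * PI.
Proof.
  intros Hom Hs. rewrite Im_J.
  replace (Im s + Rabs t / 2 * Rsum k (fun i => om i * Carg (RtoC (om i) * s)) - Im s)
    with (Rabs t / 2 * Rsum k (fun i => om i * Carg (RtoC (om i) * s))) by ring.
  rewrite Rabs_mult. rewrite (Rabs_pos_eq (Rabs t / 2)) by (pose proof (Rabs_pos t); lra).
  rewrite Rmult_assoc. apply Rmult_le_compat_l. pose proof (Rabs_pos t); lra.
  eapply Rle_trans. apply Rsum_abs. rewrite Rmult_comm, <- Rsum_scal. apply Rsum_le. intros.
  pose proof (Hom i H). assert (0 <= Im (RtoC (om i) * s)) by (rewrite Im_scal; apply Rmult_le_pos; lra).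
  pose proof (Carg_bound _ H1). rewrite Rabs_mult, !Rabs_pos_eq by lra. nra.
Qed.

Lemma rpow60 y e (N : nat) : 0 < y -> e = INR N / 60 -> Rpower y e = (Rpower y (1/60)) ^ N.
Proof. intros. subst. rewrite <- Rpower_pow by (unfold Rpower; apply exp_pos).
  rewrite Rpower_mult. f_equal. field. Qed.

Lemma abs_tri q p : Rabs p <= Rabs q + Rabs (q - p).
Proof. replace p with (q - (q - p)) at 1 by ring. unfold Rminus at 1. eapply Rle_trans. apply Rabs_triang. rewrite Rabs_Ropp. lra. Qed.

Lemma final_exp (c E L X : R) : c <= exp E -> E <= L - X -> c <= exp L * exp (- X).
Proof. intros. rewrite <- exp_plus. eapply Rle_trans; eauto. apply exp_le_exp. lra. Qed.

Lemma pow_ge_self a (N : nat) : 1 <= a -> (1 <= N)%nat -> a <= a ^ N.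
Proof. intros. pose proof (pow_mono a 1 N H H0). simpl in H1. lra. Qed.

Theorem mainTheorem14 :
  forall (F : C -> C) (alpha : C) (m : nat) (Q : R) (k : nat)
         (omega : nat -> R) (mu : nat -> C),
  in_Ssharp F alpha m Q k omega mu ->
  forall Cc : R, 0 < Cc ->
  exists y0 K : R, 0 < y0 /\ 0 < K /\
  forall (t : R) (s : C) (n : nat),
    t < 0 -> Rabs t <= Cc ->
    0 < Im s -> Rabs (Re s) <= Cc * Rpower (Im s) (1/4) ->
    (1 <= n)%nat -> INR n <= exp (Rpower (Im s) (3/5) / Rabs t) ->
    y0 <= Im s ->
    (forall z : C,
        Rabs (Re s - Re z) <= Rpower (Im s) (3/5) ->
        1/2 * Rpower (Im s) (2/3) <= Rabs (Im s - Im z) <= 2 * Rpower (Im s) (2/3) ->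
        Cmod (integrandI alpha m Q k omega mu t s n z)
          <= K * exp (- (Rpower (Im s) (4/3) / (10 * Rabs t)))) /\
    (forall z : C,
        Re z = 2 ->
        Rpower (Im s) (2/3) <= Rabs (Im s - Im z) ->
        Cmod (integrandI alpha m Q k omega mu t s n z)
          <= K * exp (- (1 / (2 * Rabs t) * (Im s - Im z) ^ 2))).
Proof.
  intros F alpha m Q k om mu HF Cc HCc.
  destruct HF as (_ & _ & _ & Hα & HQ & Hk & Hom & _).
  assert (Homp : forall i, (i < k)%nat -> 0 < om i) by (intros; apply Hom; auto).
  assert (Hmup : forall i, (i < k)%nat -> 0 <= Re (mu i)) by (intros; apply Hom; auto).
  pose proof PI_RGT_0 as Hpi.
  set (LQ := Rabs (ln Q)).
  set (W := Rsum k om).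
  set (Lw := Rsum k (fun i => om i * Rabs (ln (om i)))).
  set (R0 := LQ + Lw + W * ln (Cc + 1)).
  set (Mmu := Rsum k (fun i => (1 + Rabs (Im (mu i))) / om i)).
  set (Gc := Rsum k (fun i => (om i * (Cc + 1) + Rabs (Re (mu i)) + 2) ^ 2)).
  set (G2 := Rsum k (fun i => Gb (om i * 2 + Re (mu i)) (Rmin 1 (om i * 2 + Re (mu i))) + 1)).
  set (mm := INR m).
  set (S0 := 2 * mm * (Cc + 4) + LQ * (Cc + 1) + 3 * Gc + Cc * (R0 ^ 2 + 3600 * W ^ 2) + W * PI / 2).
  set (S1 := 2 * mm + Cc * (R0 ^ 2 + 3600 * W ^ 2)).
  set (A := 5 + 2 * Mmu + 10 * (Cc + 3) + 20 * Cc * S0 + 16 * (Cc + 2) ^ 2 + 8 * Cc * S1).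
  set (la := ln (Cmod alpha)).
  set (lnK := Rmax (la + INR k) (la + 2 * LQ + G2 + 4 * mm + Cc * (W * PI + 2 * mm) ^ 2)).
  assert (HLQ : 0 <= LQ) by apply Rabs_pos.
  assert (HW : 0 <= W) by (apply Rsum_nonneg; intros; left; auto).
  assert (HLw : 0 <= Lw) by (apply Rsum_nonneg; intros; apply Rmult_le_pos; [left; auto|apply Rabs_pos]).
  assert (Hlc : 0 <= ln (Cc + 1)) by (rewrite <- ln_1; apply ln_le; lra).
  assert (HR0 : 0 <= R0) by (unfold R0; pose proof (Rmult_le_pos _ _ HW Hlc); lra).
  assert (HMmu : 0 <= Mmu).
  { apply Rsum_nonneg; intros. pose proof (Homp i H). pose proof (Rabs_pos (Im (mu i))).
    apply Rdiv_le_0_compat; lra. }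
  assert (HGc : 0 <= Gc) by (apply Rsum_nonneg; intros; apply pow2_ge_0).
  assert (Hmm : 0 <= mm) by apply pos_INR.
  assert (HRW : 0 <= R0 ^ 2 + 3600 * W ^ 2) by (pose proof (pow2_ge_0 R0); pose proof (pow2_ge_0 W); lra).
  assert (HS0 : 0 <= S0).
  { unfold S0. pose proof (Rmult_le_pos _ _ Hmm (Rlt_le _ _ HCc)).
    pose proof (Rmult_le_pos _ _ HLQ (Rlt_le _ _ HCc)).
    pose proof (Rmult_le_pos _ _ (Rlt_le _ _ HCc) HRW).
    pose proof (Rmult_le_pos _ _ HW (Rlt_le _ _ Hpi)). nra. }
  assert (HS1 : 0 <= S1) by (unfold S1; pose proof (Rmult_le_pos _ _ (Rlt_le _ _ HCc) HRW); lra).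
  assert (HA5 : 5 <= A).
  { unfold A. pose proof (Rmult_le_pos _ _ (Rlt_le _ _ HCc) HS0). pose proof (Rmult_le_pos _ _ (Rlt_le _ _ HCc) HS1).
    pose proof (pow2_ge_0 (Cc + 2)). lra. }
  exists (A ^ 60), (exp lnK).
  split; [apply pow_lt; lra|]. split; [apply exp_pos|].
  intros t s n Ht HtC Hy Hx Hn1 Hn Hy0.
  set (y := Im s) in *. set (x := Re s) in *. set (tau := Rabs t) in *.
  assert (Htau : 0 < tau) by (apply Rabs_pos_lt; lra).
  set (a := Rpower y (1/60)).
  assert (Hya : y = a ^ 60).
  { unfold a. rewrite <- (rpow60 y 1 60 Hy) by (simpl; field). rewrite Rpower_1; auto. }
  assert (HaA : A <= a).
  { unfold a. replace A with (Rpower (A ^ 60) (1/60)).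
    apply Rle_Rpower_l. lra. split. apply pow_lt; lra. auto.
    rewrite <- Rpower_pow by lra. rewrite Rpower_mult. replace (INR 60 * (1/60)) with 1 by (simpl; field).
    apply Rpower_1; lra. }
  assert (Ha1 : 1 <= a) by lra.
  assert (H14 : Rpower y (1/4) = a ^ 15) by (apply rpow60; auto; simpl; field).
  assert (H35 : Rpower y (3/5) = a ^ 36) by (apply rpow60; auto; simpl; field).
  assert (H23 : Rpower y (2/3) = a ^ 40) by (apply rpow60; auto; simpl; field).
  assert (H43 : Rpower y (4/3) = a ^ 80) by (apply rpow60; auto; simpl; field).
  rewrite H14 in Hx. rewrite H35 in Hn. rewrite H35, H23, H43. clear H14.
  assert (Hp15 : a <= a ^ 15) by (apply pow_ge_self; auto; lia).
  assert (Hp36 : a <= a ^ 36) by (apply pow_ge_self; auto; lia).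
  assert (Hp40 : a <= a ^ 40) by (apply pow_ge_self; auto; lia).
  assert (Hp60 : a <= a ^ 60) by (apply pow_ge_self; auto; lia).
  assert (H1560 : a ^ 15 <= a ^ 60) by (apply pow_mono; auto; lia).
  assert (H1536 : a ^ 15 <= a ^ 36) by (apply pow_mono; auto; lia).
  assert (H3660 : a ^ 36 <= a ^ 60) by (apply pow_mono; auto; lia).
  assert (H4060 : a ^ 40 <= a ^ 60) by (apply pow_mono; auto; lia).
  assert (Hn0 : 0 < INR n) by (apply lt_0_INR; lia).
  assert (Hln0 : 0 <= ln (INR n)) by (apply ln_nat_nonneg; auto).
  assert (Hln : ln (INR n) <= a ^ 36 / tau).
  { rewrite <- (ln_exp (a ^ 36 / tau)). apply ln_le; auto. }
  assert (Hs1 : 1 <= Cmod s).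
  { pose proof (im_le_Cmod s). fold y in H. rewrite Rabs_pos_eq in H by lra. lra. }
  assert (Hs2 : Cmod s <= (Cc + 1) * a ^ 60).
  { pose proof (Cmod_le_sum s). fold x y in H. rewrite (Rabs_pos_eq y) in H by lra.
    assert (Cc * a ^ 15 <= Cc * a ^ 60) by (apply Rmult_le_compat_l; lra). lra. }
  assert (Hlns : ln (Cmod s) <= ln (Cc + 1) + 60 * a).
  { apply Rle_trans with (ln ((Cc + 1) * a ^ 60)). apply ln_le; lra.
    rewrite ln_mult by (try lra; apply pow_lt; lra). rewrite ln_pow by lra.
    pose proof (ln_le_id a ltac:(lra)). simpl INR. lra. }
  assert (HRe : Rabs (Re (J Q k om t s) - x) <= tau * (R0 + 60 * W * a) / 2).
  { pose proof (ReJ_bound Q k om t s Homp Hs1). fold tau x LQ Lw W in H.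
    eapply Rle_trans; [exact H|].
    assert (W * ln (Cmod s) <= W * (ln (Cc + 1) + 60 * a)) by (apply Rmult_le_compat_l; auto).
    unfold R0. assert (0 <= tau / 2) by lra.
    assert (tau / 2 * (LQ + Lw + W * ln (Cmod s)) <= tau / 2 * (LQ + Lw + W * (ln (Cc + 1) + 60 * a))) by (apply Rmult_le_compat_l; lra).
    lra. }
  assert (HIm : Rabs (Im (J Q k om t s) - y) <= tau * W * PI / 2).
  { pose proof (ImJ_bound Q k om t s Homp ltac:(fold y; lra)). fold tau W y in H. lra. }
  assert (Hlnk : la + INR k <= lnK) by apply Rmax_l.
  assert (Hlnk2 : la + 2 * LQ + G2 + 4 * mm + Cc * (W * PI + 2 * mm) ^ 2 <= lnK) by apply Rmax_r.
  split.
  - intros z Hz1 Hz2.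
    set (g := fun i => Gb (Re (RtoC (om i) * z + mu i)) 1 + 1).
    assert (HRez : Rabs (Re z) <= (Cc + 1) * a ^ 36).
    { pose proof (abs_tri x (Re z)). assert (Cc * a ^ 15 <= Cc * a ^ 36) by (apply Rmult_le_compat_l; lra). lra. }
    assert (HImz1 : Im z >= a ^ 60 / 2).
    { assert (a ^ 60 = a ^ 20 * a ^ 40) by ring. assert (5 <= a ^ 20) by (pose proof (pow_ge_self a 20 Ha1 ltac:(lia)); lra).
      assert (5 * a ^ 40 <= a ^ 20 * a ^ 40) by (apply Rmult_le_compat_r; [apply pow_le; lra|lra]).
      pose proof (Rle_abs (y - Im z)). lra. }
    assert (HImz2 : Rabs (Im z) <= 3 * a ^ 60).
    { pose proof (abs_tri y (Im z)). rewrite (Rabs_pos_eq y) in H by lra. lra. }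
    assert (HG : forall i, (i < k)%nat -> Cmod (CGamma (RtoC (om i) * z + mu i)) <= exp (g i)).
    { intros i Hi. apply CGamma_bound. lra. intros j.
      eapply Rle_trans; [|apply im_le_Cmod]. rewrite Im_wj, Im_w.
      pose proof (Homp i Hi).
      assert ((1 + Rabs (Im (mu i))) / om i <= Mmu).
      { apply (term_le_Rsum k (fun i => (1 + Rabs (Im (mu i))) / om i)); auto.
        intros. pose proof (Homp i0 H0). pose proof (Rabs_pos (Im (mu i0))). apply Rdiv_le_0_compat; lra. }
      assert (Mmu <= a ^ 60 / 2).
      { unfold A in HaA. pose proof (Rmult_le_pos _ _ (Rlt_le _ _ HCc) HS0). pose proof (Rmult_le_pos _ _ (Rlt_le _ _ HCc) HS1).
        pose proof (pow2_ge_0 (Cc + 2)). lra. }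
      assert (om i * ((1 + Rabs (Im (mu i))) / om i) <= om i * Im z) by (apply Rmult_le_compat_l; lra).
      replace (om i * ((1 + Rabs (Im (mu i))) / om i)) with (1 + Rabs (Im (mu i))) in H2 by (field; lra).
      pose proof (Rle_abs (- Im (mu i))). rewrite Rabs_Ropp in H3.
      rewrite Rabs_pos_eq; lra. }
    pose proof (integrand_mod alpha m Q k om mu t s n z g Hα ltac:(lra) HG) as HI.
    eapply final_exp; [exact HI|].
    fold tau la mm.
    assert (Hsg : Rsum k g <= 3 * Gc * a ^ 72 + INR k).
    { apply Rle_trans with (Rsum k (fun i => 3 * a ^ 72 * (om i * (Cc + 1) + Rabs (Re (mu i)) + 2) ^ 2 + 1)).
      - apply Rsum_le. intros i Hi. unfold g, Gb. rewrite ln_1, Rabs_R0, Rmult_0_r, Rplus_0_r.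
        rewrite Re_w. pose proof (Homp i Hi) as Hoi.
        set (ci := om i * (Cc + 1) + Rabs (Re (mu i)) + 2).
        assert (Rabs (om i * Re z + Re (mu i)) + 2 <= ci * a ^ 36).
        { pose proof (Rabs_triang (om i * Re z) (Re (mu i))) as Htr. rewrite Rabs_mult, (Rabs_pos_eq (om i)) in Htr by lra.
          assert (om i * Rabs (Re z) <= om i * ((Cc + 1) * a ^ 36)) by (apply Rmult_le_compat_l; lra).
          assert (Rabs (Re (mu i)) <= Rabs (Re (mu i)) * a ^ 36).
          { pose proof (Rabs_pos (Re (mu i))). assert (Rabs (Re (mu i)) * 1 <= Rabs (Re (mu i)) * a ^ 36) by (apply Rmult_le_compat_l; lra). lra. }
          unfold ci. lra. }
        assert ((Rabs (om i * Re z + Re (mu i)) + 2) ^ 2 <= (ci * a ^ 36) ^ 2).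
        { apply pow_incr. pose proof (Rabs_pos (om i * Re z + Re (mu i))). lra. }
        assert ((ci * a ^ 36) ^ 2 = a ^ 72 * ci ^ 2) by ring. lra.
      - rewrite Rsum_plus, Rsum_scal, Rsum_const. fold Gc. lra. }
    assert (Hcz : Cmod z <= (Cc + 4) * a ^ 60).
    { pose proof (Cmod_le_sum z). assert ((Cc + 1) * a ^ 36 <= (Cc + 1) * a ^ 60) by (apply Rmult_le_compat_l; lra). lra. }
    assert (Hrq : Re z * ln Q <= LQ * (Cc + 1) * a ^ 36).
    { eapply Rle_trans. apply Rle_abs. rewrite Rabs_mult. fold LQ.
      assert (Rabs (Re z) * LQ <= (Cc + 1) * a ^ 36 * LQ) by (apply Rmult_le_compat_r; auto). lra. }
    assert (Hrd : Rabs (Re (J Q k om t s) - Re z) <= a ^ 36 + tau * (R0 + 60 * W * a) / 2).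
    { replace (Re (J Q k om t s) - Re z) with ((Re (J Q k om t s) - x) + (x - Re z)) by ring.
      eapply Rle_trans. apply Rabs_triang. lra. }
    assert (Hid : a ^ 40 / 2 - tau * W * PI / 2 <= Rabs (Im (J Q k om t s) - Im z)).
    { replace (Im (J Q k om t s) - Im z) with ((y - Im z) + (Im (J Q k om t s) - y)) by ring.
      pose proof (Rabs_triang_inv (y - Im z) (- (Im (J Q k om t s) - y))). rewrite Rabs_Ropp in H.
      replace (y - Im z - - (Im (J Q k om t s) - y)) with ((y - Im z) + (Im (J Q k om t s) - y)) in H by ring. lra. }
    assert (Hnt : - (Re z * ln (INR n)) <= (Cc + 1) * a ^ 72 / tau).
    { assert (- (Re z * ln (INR n)) <= Rabs (Re z) * ln (INR n)).
      { pose proof (Rle_abs (- Re z)). rewrite Rabs_Ropp in H.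
        assert (- Re z * ln (INR n) <= Rabs (Re z) * ln (INR n)) by (apply Rmult_le_compat_r; auto). lra. }
      assert (Rabs (Re z) * ln (INR n) <= (Cc + 1) * a ^ 36 * (a ^ 36 / tau)).
      { apply Rmult_le_compat; auto. apply Rabs_pos. }
      assert ((Cc + 1) * a ^ 36 * (a ^ 36 / tau) = (Cc + 1) * a ^ 72 / tau) by (field; lra). lra. }
    assert (Ha8 : a <= a ^ 8) by (apply pow_ge_self; auto; lia).
    assert (HA1 : 10 * (Cc + 3) <= a ^ 8).
    { unfold A in HaA. pose proof (Rmult_le_pos _ _ (Rlt_le _ _ HCc) HS0). pose proof (Rmult_le_pos _ _ (Rlt_le _ _ HCc) HS1).
      pose proof (pow2_ge_0 (Cc + 2)). lra. }
    assert (HA2 : 20 * Cc * S0 <= a ^ 8).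
    { unfold A in HaA. pose proof (Rmult_le_pos _ _ (Rlt_le _ _ HCc) HS1).
      pose proof (pow2_ge_0 (Cc + 2)). lra. }
    pose proof (pure_i a tau Cc mm LQ R0 W Gc (INR k) la (Cmod z) (Re z * ln Q) (Rsum k g)
      (Re (J Q k om t s) - Re z) (Im (J Q k om t s) - Im z) (- (Re z * ln (INR n)))
      Ha1 Htau HtC Hmm HLQ HR0 HW HGc Hcz Hrq Hsg Hrd Hid Hnt HA1 HA2) as HP.
    lra.
  - intros z Hz1 Hz2.
    set (g := fun i => Gb (Re (RtoC (om i) * z + mu i)) (Rmin 1 (Re (RtoC (om i) * z + mu i))) + 1).
    assert (HG : forall i, (i < k)%nat -> Cmod (CGamma (RtoC (om i) * z + mu i)) <= exp (g i)).
    { intros i Hi. pose proof (Homp i Hi) as Hoi. pose proof (Hmup i Hi) as Hmi.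
      assert (Hsig : 0 < Re (RtoC (om i) * z + mu i)) by (rewrite Re_w, Hz1; lra).
      apply CGamma_bound.
      split. apply Rmin_pos; lra. apply Rmin_l.
      intros j. eapply Rle_trans; [|apply re_le_Cmod]. rewrite Re_wj.
      eapply Rle_trans; [|apply Rle_abs]. pose proof (pos_INR j). pose proof (Rmin_r 1 (Re (RtoC (om i) * z + mu i))). lra. }
    pose proof (integrand_mod alpha m Q k om mu t s n z g Hα ltac:(lra) HG) as HI.
    eapply final_exp; [exact HI|].
    fold tau la mm.
    assert (Hsg : Rsum k g <= G2).
    { right. apply Rsum_ext. intros i Hi. unfold g. rewrite Re_w, Hz1. reflexivity. }
    set (D := y - Im z).
    assert (Hcz : Cmod z <= 2 + a ^ 60 + Rabs D).
    { pose proof (Cmod_le_sum z). rewrite Hz1, Rabs_pos_eq in H by lra.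
      pose proof (abs_tri y (Im z)). rewrite (Rabs_pos_eq y) in H0 by lra. fold D in H0. lra. }
    assert (Hrq : Re z * ln Q <= 2 * LQ) by (rewrite Hz1; pose proof (Rle_abs (ln Q)); fold LQ in H; lra).
    assert (Hrd : Rabs (Re (J Q k om t s) - Re z) <= Cc * a ^ 15 + 2 + tau * (R0 + 60 * W * a) / 2).
    { replace (Re (J Q k om t s) - Re z) with ((Re (J Q k om t s) - x) + (x - 2)) by (rewrite Hz1; ring).
      eapply Rle_trans. apply Rabs_triang.
      assert (Rabs (x - 2) <= Rabs x + 2).
      { apply Rabs_le. pose proof (Rle_abs x). pose proof (Rle_abs (- x)). rewrite Rabs_Ropp in H0. lra. }
      lra. }
    assert (Hid : Rabs D - tau * W * PI / 2 <= Rabs (Im (J Q k om t s) - Im z)).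
    { replace (Im (J Q k om t s) - Im z) with (D + (Im (J Q k om t s) - y)) by (unfold D; ring).
      pose proof (Rabs_triang_inv D (- (Im (J Q k om t s) - y))). rewrite Rabs_Ropp in H.
      replace (D - - (Im (J Q k om t s) - y)) with (D + (Im (J Q k om t s) - y)) in H by ring. lra. }
    assert (Hnt : - (Re z * ln (INR n)) <= 0) by (rewrite Hz1; lra).
    assert (HD : a ^ 40 <= Rabs D) by (unfold D; lra).
    assert (HA1 : 16 * (Cc + 2) ^ 2 <= a ^ 50).
    { assert (a <= a ^ 50) by (apply pow_ge_self; auto; lia).
      unfold A in HaA. pose proof (Rmult_le_pos _ _ (Rlt_le _ _ HCc) HS0). pose proof (Rmult_le_pos _ _ (Rlt_le _ _ HCc) HS1). lra. }
    assert (HA2 : 8 * Cc * (2 * mm + Cc * (R0 ^ 2 + 3600 * W ^ 2)) <= a ^ 20).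
    { assert (a <= a ^ 20) by (apply pow_ge_self; auto; lia). fold S1.
      unfold A in HaA. pose proof (Rmult_le_pos _ _ (Rlt_le _ _ HCc) HS0). pose proof (pow2_ge_0 (Cc + 2)). lra. }
    pose proof (pure_ii a tau Cc mm LQ R0 W G2 la (Cmod z) (Re z * ln Q) (Rsum k g)
      (Re (J Q k om t s) - Re z) (Im (J Q k om t s) - Im z) (- (Re z * ln (INR n))) D
      Ha1 Htau HtC Hmm HLQ HR0 HW Hcz Hrq Hsg Hrd Hid Hnt HD HA1 HA2) as HP.
    lra.
Qed.
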